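(* Let $\varepsilon>0$ and let $G=(V,E)$ be a multigraph with $|V|=s\ge 2$ vertices and $|E|=m\ge s(1+\varepsilon)$ edges. Then there exists a set $S\subseteq V$ of $|S|\le 8\log(s)\cdot\lceil 1/\varepsilon\rceil$ vertices spanning at least $|S|+1$ edges.
   Context: A multigraph is a graph that may contain parallel edges and (possibly parallel) self-loops; edges are counted with multiplicity. A set of vertices $S$ spans an edge if all endpoints of the edge lie in $S$ (a self-loop at $v$ is spanned iff $v\in S$). Logarithms are base 2. *)

(* Defs.v *)
From mathcomp Require Import all_boot.
From Stdlib Require Import Reals.

(* A multigraph on vertex type T: a finite type E of edges (counted with
   multiplicity) with an endpoint map ends : E -> T * T; a self-loop at v is
   an edge with ends e = (v, v). *)

Definition spans {T E : finType} (ends : E -> T * T) (S : {set T}) (e : E) : bool :=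
  ((ends e).1 \in S) && ((ends e).2 \in S).

Definition n_spanned {T E : finType} (ends : E -> T * T) (S : {set T}) : nat :=
  #|[set e | spans ends S e]|.

Definition log2 (x : R) : R := (ln x / ln 2)%R.

(* ceiling: Int_part is the floor, so ceil x = - floor (- x) *)
Definition ceilR (x : R) : Z := (- Int_part (- x))%Z.

(* Main.v *)
Require Import Defs.
From mathcomp Require Import all_boot.
From Stdlib Require Import Reals.
From mathcomp Require Import zify.
Set Implicit Arguments.
Unset Strict Implicit.
Local Open Scope nat_scope.
Local Notation "m ^ n" := (expn m n) : nat_scope.

Section Comb.
Variables (T E : finType) (ends : E -> T * T).

Definition adj (e : E) (x y : T) : bool :=
  ((ends e).1 == x) && ((ends e).2 == y) || ((ends e).1 == y) && ((ends e).2 == x).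

Definition touch (W B : {set T}) : nat :=
  #|[set e | spans ends W e && (((ends e).1 \in B) || ((ends e).2 \in B))]|.

Definition step (W X : {set T}) : {set T} :=
  X :|: [set y in W | [exists e, [exists x in X, adj e x y]]].

Definition ball (W : {set T}) (v : T) (r : nat) : {set T} := iter r (step W) [set v].

Lemma decomp (W B : {set T}) : n_spanned ends W = n_spanned ends (W :\: B) + touch W B.
Proof.
rewrite /n_spanned /touch -(cardsID [set e | ((ends e).1 \in B) || ((ends e).2 \in B)]
   [set e | spans ends W e]) addnC.
congr (_ + _); apply: eq_card => e; rewrite !inE /spans ?inE.
all: by case: ((ends e).1 \in B); case: ((ends e).2 \in B); case: ((ends e).1 \in W); case: ((ends e).2 \in W).
Qed.

Lemma n_spanned0 : n_spanned ends set0 = 0.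
Proof.
apply/eqP; rewrite cards_eq0; apply/eqP/setP => e; by rewrite !inE /spans inE.
Qed.

Lemma n_spannedT : n_spanned ends setT = #|E|.
Proof. rewrite /n_spanned; apply: eq_card => e; by rewrite !inE /spans !inE. Qed.

Lemma ball_sub (W : {set T}) (v : T) r : v \in W -> ball W v r \subset W.
Proof.
move=> vW; elim: r => [|r IH] /=; first by rewrite sub1set.
rewrite subUset IH /=; apply/subsetP => y; by rewrite inE => /andP[].
Qed.

Lemma ball_S W v r : ball W v r \subset ball W v r.+1.
Proof. exact: subsetUl. Qed.

Lemma ball_mono (W : {set T}) (v : T) m n : m <= n -> ball W v m \subset ball W v n.
Proof.
move/subnKC <-; elim: (n - m) => [|d IH]; first by rewrite addn0.
rewrite addnS; exact: subset_trans IH (ball_S _ _ _).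
Qed.

Lemma touch_ball (W : {set T}) (v : T) r : v \in W ->
  touch W (ball W v r) <= n_spanned ends (ball W v r.+1).
Proof.
move=> vW; apply: subset_leq_card; apply/subsetP => e; rewrite !inE /spans.
move=> /andP[/andP[h1 h2] /orP[b1|b2]]; apply/andP; split.
- by rewrite /ball /= -/(ball W v r) inE b1.
- rewrite /ball /= -/(ball W v r) !inE h2 /=; apply/orP; right.
  apply/existsP; exists e; apply/existsP; exists (ends e).1; by rewrite b1 /adj !eqxx.
- rewrite /ball /= -/(ball W v r) !inE h1 /=; apply/orP; right.
  apply/existsP; exists e; apply/existsP; exists (ends e).2; by rewrite b2 /adj !eqxx orbT.
- by rewrite /ball /= -/(ball W v r) inE b2.
Qed.

Lemma growth (W : {set T}) (v : T) k n : v \in W ->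
  (forall B : {set T}, B \subset W -> (k + 1) * #|B| <= k * touch W B) ->
  (forall r, r < n -> n_spanned ends (ball W v r.+1) <= #|ball W v r.+1|) ->
  (k + 1) ^ n <= k ^ n * #|ball W v n|.
Proof.
move=> vW NG; elim: n => [|n IH] Hr; first by rewrite /ball /= cards1.
have IH' := IH (fun r hr => Hr r (ltnW hr)).
have h1 := NG _ (ball_sub n vW).
have h2 := touch_ball n vW.
have h3 := Hr n (ltnSn n).
rewrite !expnS.
have a1 : (k + 1) * (k + 1) ^ n <= (k + 1) * (k ^ n * #|ball W v n|) by rewrite leq_mul2l IH' orbT.
have a2 : (k + 1) * #|ball W v n| <= k * #|ball W v n.+1|.
  apply: (leq_trans h1); rewrite leq_mul2l; apply/orP; right; exact: leq_trans h2 h3.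
apply: (leq_trans a1); rewrite mulnCA (mulnC k) -mulnA leq_mul2l a2 orbT //.
Qed.

Lemma bern k n : k ^ n.+1 + n * k ^ n <= k * (k + 1) ^ n.
Proof.
elim: n => [|n IH]; first by rewrite mul0n addn0 expn1 expn0 muln1.
have e1 : k * (k + 1) ^ n.+1 = (k + 1) * (k * (k + 1) ^ n) by rewrite expnS mulnCA.
rewrite e1.
apply: (@leq_trans ((k + 1) * (k ^ n.+1 + n * k ^ n))); last by rewrite leq_mul2l IH orbT.
rewrite !expnS; move: (k ^ n) => a; nia.
Qed.

Lemma bern2 k : 0 < k -> 2 * k ^ k <= (k + 1) ^ k.
Proof.
move=> k0; have := bern k k; rewrite expnS => h.
rewrite -(leq_pmul2l k0); apply: leq_trans h; rewrite mul2n -addnn mulnDr; done.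
Qed.


Lemma adj_spans (S : {set T}) e x y : adj e x y -> x \in S -> y \in S -> spans ends S e.
Proof.
rewrite /adj /spans; case/orP => /andP[/eqP -> /eqP ->] hx hy; by rewrite ?hx ?hy.
Qed.

Lemma cardU_le (A B : {set T}) : #|A :|: B| <= #|A| + #|B|.
Proof. by rewrite cardsU leq_subr. Qed.

Section Tree.
Variables (W : {set T}) (v : T) (R : nat) (e0 : E).
Hypothesis vW : v \in W.

Definition dP (w : T) (n : nat) : bool := (w \in ball W v n) || (n == R).
Lemma dex w : exists n, dP w n.
Proof. by exists R; rewrite /dP eqxx orbT. Qed.
Definition dd w := ex_minn (dex w).

Lemma d_min w n : w \in ball W v n -> dd w <= n.
Proof. move=> hw; rewrite /dd; case: ex_minnP => m _ H; apply: H; by rewrite /dP hw. Qed.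

Lemma d_in w : w \in ball W v R -> w \in ball W v (dd w).
Proof. move=> hw; rewrite /dd; case: ex_minnP => m; rewrite /dP => /orP[//|/eqP ->] //. Qed.

Lemma v_ball n : v \in ball W v n.
Proof. apply: (subsetP (ball_mono W v (leq0n n))); by rewrite /ball /= inE. Qed.

Definition pk w := [pick xe : T * E | (xe.1 \in ball W v (dd w).-1) && adj xe.2 xe.1 w].
Definition up w := if pk w is Some xe then xe.1 else w.
Definition te w := if pk w is Some xe then xe.2 else e0.

Lemma d_v : dd v = 0.
Proof. apply/eqP; rewrite -leqn0; apply: d_min; by rewrite /ball /= inE. Qed.

Lemma up_v : up v = v.
Proof.
rewrite /up /pk d_v /=; case: pickP => [[x e] /= /andP[]|//].
by rewrite /ball /= inE => /eqP ->.
Qed.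

Lemma up_spec w : w \in ball W v R -> w != v ->
  [/\ up w \in ball W v R, dd (up w) < dd w & adj (te w) (up w) w].
Proof.
move=> wR wv.
have wd := d_in wR. have dR := d_min wR.
case Edw: (dd w) => [|n].
  by rewrite Edw /ball /= inE in wd; rewrite (eqP wd) eqxx in wv.
have wn : w \notin ball W v n.
  by apply/negP => h; have := d_min h; rewrite Edw ltnn.
rewrite Edw in wd dR.
move: wd; rewrite /ball /= -/(ball W v n) /step inE (negbTE wn) /= inE.
case/andP => _ /existsP[e /existsP[x /andP[xn ad]]].
rewrite /up /te /pk Edw /=.
case: pickP => [[x' e'] /= /andP[x'n ad']|/(_ (x, e))]; last by rewrite /= xn ad.
split => //.
  exact: (subsetP (ball_mono W v (ltnW dR))).
by rewrite ltnS; apply: d_min.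
Qed.

Lemma iter_up_v i : iter i up v = v.
Proof. by elim: i => //= i ->; exact: up_v. Qed.

Lemma iter_up_ball i w : w \in ball W v R -> iter i up w \in ball W v R.
Proof.
move=> wR; elim: i => //= i IH.
case: (eqVneq (iter i up w) v) => [->|yv]; first by rewrite up_v v_ball.
by case: (up_spec IH yv).
Qed.

Lemma iter_up_end i w : w \in ball W v R -> dd w <= i -> iter i up w = v.
Proof.
elim: i w => [|i IH] w wR hd.
  have := d_in wR; move: hd; rewrite leqn0 => /eqP ->.
  by rewrite /ball /= inE => /eqP ->.
rewrite iterSr; case: (eqVneq w v) => [->|wv]; first by rewrite up_v iter_up_v.
case: (up_spec wR wv) => h1 h2 _; apply: IH h1 _.
by rewrite -ltnS (leq_trans h2 hd).
Qed.

Definition anc w : {set T} := [set iter (nat_of_ord i) up w | i : 'I_R.+1].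

Lemma anc_card w : #|anc w| <= R.+1.
Proof. apply: leq_trans (leq_imset_card _ _) _; by rewrite cardT size_enum_ord. Qed.

Lemma anc_self w : w \in anc w.
Proof. by apply/imsetP; exists ord0. Qed.

Lemma anc_ball w x : w \in ball W v R -> x \in anc w -> x \in ball W v R.
Proof. by move=> wR /imsetP[i _ ->]; apply: iter_up_ball. Qed.

Lemma anc_v w : w \in ball W v R -> v \in anc w.
Proof.
move=> wR; apply/imsetP; exists ord_max => //=.
by rewrite iter_up_end // d_min.
Qed.

Lemma anc_closed w x : w \in ball W v R -> x \in anc w -> x != v -> up x \in anc w.
Proof.
move=> wR /imsetP[i _ ->] hv.
case: (ltnP i R) => hi.
  by apply/imsetP; exists (Ordinal (hi : i.+1 < R.+1)); rewrite //= iterS.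
have iR : nat_of_ord i = R by apply/eqP; rewrite eqn_leq hi -ltnS ltn_ord.
by rewrite iR iter_up_end ?eqxx ?d_min in hv.
Qed.

Lemma te_inj : {in ball W v R :\ v &, injective te}.
Proof.
move=> w w' /setD1P[wv wR] /setD1P[w'v w'R] he.
have [h1 h2 h3] := up_spec wR wv; have [h1' h2' h3'] := up_spec w'R w'v.
rewrite he in h3; move: h3 h3'; rewrite /adj.
case/orP => /andP[/eqP ea /eqP eb]; case/orP => /andP[/eqP ea' /eqP eb'].
- by rewrite -eb eb'.
- exfalso; move: h2 h2'; rewrite -ea ea' -eb' eb => p q.
  by have := ltn_trans p q; rewrite ltnn.
- exfalso; move: h2 h2'; rewrite -eb eb' -ea' ea => p q.
  by have := ltn_trans p q; rewrite ltnn.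
- by rewrite -ea ea'.
Qed.

Lemma witness : #|ball W v R| + 1 <= n_spanned ends (ball W v R) ->
  exists S : {set T}, #|S| <= 4 * R.+1 /\ #|S| + 1 <= n_spanned ends S.
Proof.
set B := ball W v R => HB.
have vB : v \in B := v_ball R.
set TE := te @: (B :\ v).
set SB := [set e | spans ends B e].
have TEsub : TE \subset SB.
  apply/subsetP => e /imsetP[w /setD1P[wv wB] ->]; rewrite inE.
  have [h1 _ h3] := up_spec wB wv; exact: adj_spans h3 h1 wB.
have cTE : #|TE| = #|B| - 1.
  rewrite (card_in_imset te_inj) (cardsD1 v B) vB; by rewrite add1n subn1.
have c2 : 1 < #|SB :\: TE|.
  rewrite cardsD (setIidPr TEsub) cTE.
  have : #|SB| = n_spanned ends B by [].
  have : 0 < #|B| by rewrite card_gt0; apply/set0Pn; exists v.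
  move=> h0 ->; move: HB h0; move: (#|B|) (n_spanned ends B) => x y; lia.
case/card_gt1P: c2 => f1 [f2 [hf1 hf2 f12]].
move: hf1 hf2; rewrite !inE => /andP[nf1 /andP[a1 b1]] /andP[nf2 /andP[a2 b2]].
set S := anc (ends f1).1 :|: anc (ends f1).2 :|: anc (ends f2).1 :|: anc (ends f2).2.
have Sball : forall x, x \in S -> x \in B.
  move=> x; rewrite !inE => /orP[/orP[/orP[]|]|] h; exact: anc_ball h.
have Scl : forall x, x \in S -> x != v -> up x \in S.
  move=> x; rewrite !inE => /orP[/orP[/orP[]|]|] h xv.
  - by rewrite (anc_closed a1 h xv).
  - by rewrite (anc_closed b1 h xv) orbT.
  - by rewrite (anc_closed a2 h xv) orbT.
  - by rewrite (anc_closed b2 h xv) orbT.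
have vS : v \in S by rewrite !inE (anc_v a1).
exists S; split.
  apply: (leq_trans (cardU_le _ _)).
  apply: (leq_trans (leq_add (leq_trans (cardU_le _ _) (leq_add (cardU_le _ _) (leqnn _))) (leqnn _))).
  have h := leq_add (leq_add (leq_add (anc_card (ends f1).1) (anc_card (ends f1).2)) (anc_card (ends f2).1)) (anc_card (ends f2).2).
  apply: (leq_trans h); lia.
set TES := te @: (S :\ v).
set SS := [set e | spans ends S e].
have injS : {in S :\ v &, injective te}.
  move=> x y /setD1P[xv xS] /setD1P[yv yS]; apply: te_inj; by rewrite !inE ?xv ?yv Sball.
have cTES : #|TES| = #|S| - 1.
  rewrite (card_in_imset injS) (cardsD1 v S) vS; by rewrite add1n subn1.
have TESsub : TES \subset SS.
  apply/subsetP => e /imsetP[w /setD1P[wv wS] ->]; rewrite inE.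
  have [h1 _ h3] := up_spec (Sball _ wS) wv; exact: adj_spans h3 (Scl _ wS wv) wS.
have TEStE : TES \subset TE.
  apply: imsetS; apply/subsetP => x /setD1P[xv xS]; by rewrite !inE xv Sball.
have f12S : [set f1; f2] \subset SS :\: TES.
  apply/subsetP => e; rewrite !inE => /orP[]/eqP ->; rewrite /spans.
  - rewrite !inE (anc_self (ends f1).1) (anc_self (ends f1).2) ?orbT ?orTb ?andbT.
    by apply/negP => /(subsetP TEStE); rewrite (negbTE nf1).
  - rewrite !inE (anc_self (ends f2).1) (anc_self (ends f2).2) ?orbT ?orTb ?andbT.
    by apply/negP => /(subsetP TEStE); rewrite (negbTE nf2).
have := subset_leq_card f12S; rewrite cards2 f12.
have : #|SS| = n_spanned ends S by [].
have := cardsID TES SS; rewrite (setIidPr TESsub) cTES.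
have : 0 < #|S| by rewrite card_gt0; apply/set0Pn; exists v.
move=> h0 h1 h2 h3; rewrite -h2 -h1.
move: h0 h3; case: #|S| => // n _ h3.
by rewrite subn1 /= addn1 -addn2 leq_add2l.
Qed.

End Tree.


Lemma arith1 k a t b c : k * a < (k + 1) * c -> k * t < (k + 1) * b ->
  k * (a + t) < (k + 1) * (c + b).
Proof. rewrite !mulnDr; lia. Qed.

Lemma pow_bound k j : 0 < k -> 2 ^ j * k ^ (k * j) <= (k + 1) ^ (k * j).
Proof.
move=> k0; rewrite !expnM -expnMn.
case: j => [|j]; first by rewrite !expn0.
by rewrite leq_exp2r // bern2.
Qed.

Lemma nogood (W : {set T}) v k j : v \in W -> 0 < k -> #|W| < 2 ^ j ->
  (forall B : {set T}, B \subset W -> (k + 1) * #|B| <= k * touch W B) ->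
  exists S : {set T}, #|S| <= 4 * (k * j).+1 /\ #|S| + 1 <= n_spanned ends S.
Proof.
move=> vW k0 Wj NG.
case: (boolP [exists r : 'I_(k * j), #|ball W v r.+1| < n_spanned ends (ball W v r.+1)]).
  case/existsP => r hr.
  have : 0 < n_spanned ends (ball W v r.+1) by apply: leq_ltn_trans hr.
  rewrite /n_spanned card_gt0 => /set0Pn [e0 _].
  have hr' : #|ball W v r.+1| + 1 <= n_spanned ends (ball W v r.+1) by rewrite addn1.
  have [S [h1 h2]] := witness e0 vW hr'.
  exists S; split => //; apply: (leq_trans h1); rewrite leq_mul2l /= ltnS.
  by have := ltn_ord r.
rewrite negb_exists => /forallP H.
have G := growth vW NG (fun r hr => (eq_ind _ _ (H (Ordinal hr)) _ (esym (leqNgt _ _)))).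
exfalso.
have h1 := leq_trans (pow_bound j k0) G.
rewrite mulnC leq_pmul2l ?expn_gt0 ?k0 // in h1.
have h2 : #|ball W v (k * j)| <= #|W| by apply: subset_leq_card; apply: ball_sub.
by have := leq_ltn_trans (leq_trans h1 h2) Wj; rewrite ltnn.
Qed.

Lemma claim k j : 0 < k -> #|T| < 2 ^ j ->
  (forall S : {set T}, #|S| <= 4 * (k * j).+1 -> n_spanned ends S <= #|S|) ->
  forall W : {set T}, W != set0 -> k * n_spanned ends W < (k + 1) * #|W|.
Proof.
move=> k0 Tj H.
suff: forall m (W : {set T}), #|W| <= m -> W != set0 ->
    k * n_spanned ends W < (k + 1) * #|W|.
  by move=> h W; exact: h _ W (leqnn _).
elim=> [|m IH] W hW Wn.
  by move: hW; rewrite leqn0 cards_eq0 (negbTE Wn).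
case: (boolP [exists B : {set T}, [&& B \subset W, B != set0 & k * touch W B < (k + 1) * #|B|]]).
  case/existsP => B /and3P[BW Bn hB].
  rewrite (decomp W B).
  have cW : #|W| = #|W :\: B| + #|B|.
    by rewrite -(cardsID B W) (setIidPr BW) addnC.
  case: (eqVneq (W :\: B) set0) => [DB|Dn].
    by rewrite DB n_spanned0 add0n cW DB cards0 add0n.
  rewrite cW; apply: arith1 hB.
  apply: IH Dn; move: hW; rewrite cW.
  have : 0 < #|B| by rewrite card_gt0.
  move: (#|W :\: B|) (#|B|) => a b; lia.
rewrite negb_exists => /forallP NB.
have NG : forall B : {set T}, B \subset W -> (k + 1) * #|B| <= k * touch W B.
  move=> B BW; case: (eqVneq B set0) => [->|Bn]; first by rewrite cards0 muln0.
  by have := NB B; rewrite BW Bn /= -leqNgt.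
case/set0Pn: Wn => v vW.
have Wj : #|W| < 2 ^ j by apply: leq_ltn_trans Tj; apply: max_card.
have [S [h1 h2]] := nogood vW k0 Wj NG.
by have := leq_trans h2 (H S h1); rewrite addn1 ltnn.
Qed.

End Comb.

From Stdlib Require Import ZArith Lra Psatz.
Unset Implicit Arguments.
Set Strict Implicit.

Lemma pow2_INR q : INR (expn 2 q) = (2 ^ q)%R.
Proof.
elim: q => [|q IH]; first by [].
rewrite expnS -multE mult_INR IH /=; lra.
Qed.

Lemma ln_le' x y : (0 < x)%R -> (x <= y)%R -> (ln x <= ln y)%R.
Proof.
move=> x0 xy; case: (Rle_lt_or_eq_dec _ _ xy) => h.
  by apply: Rlt_le; apply: ln_increasing.
by rewrite h; apply: Rle_refl.
Qed.

Lemma arithR1 a b c e : (0 <= a)%R -> (0 <= c)%R -> (a * (1 + e) <= b)%R ->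
  (1 <= c * e)%R -> ((c + 1) * a <= c * b)%R.
Proof. intros; nra. Qed.

Lemma arithR2 s L k : (s <= 3)%R -> (1 <= L)%R -> (1 <= k)%R -> (s <= 8 * L * k)%R.
Proof. intros; nra. Qed.

Lemma arithR3 x p L k : (x <= 8 * p * k)%R -> (p <= L)%R -> (0 <= k)%R -> (x <= 8 * L * k)%R.
Proof. intros; nra. Qed.

Theorem lemma3p1 (T E : finType) (ends : E -> T * T) (eps : R) :
  (0 < eps)%R ->
  2 <= #|T| ->
  (INR #|T| * (1 + eps) <= INR #|E|)%R ->
  exists S : {set T},
    (INR #|S| <= 8 * log2 (INR #|T|) * IZR (ceilR (1 / eps)))%R /\
    #|S| + 1 <= n_spanned ends S.
Proof.
move=> eps0 s2 hE.
have hz : (1 / eps <= IZR (ceilR (1 / eps)))%R.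
  rewrite /ceilR opp_IZR; have [h _] := base_Int_part (- (1 / eps)); lra.
have z0 : (0 < ceilR (1 / eps))%Z.
  apply: lt_0_IZR; have : (0 < 1 / eps)%R by apply: Rdiv_lt_0_compat; lra.
  lra.
have kz : IZR (ceilR (1 / eps)) = INR (Z.to_nat (ceilR (1 / eps))).
  by rewrite INR_IZR_INZ Z2Nat.id //; lia.
rewrite kz; rewrite kz in hz.
move: (Z.to_nat (ceilR (1 / eps))) hz => k hz {kz z0}.
have kpos : (0 < INR k)%R.
  have : (0 < 1 / eps)%R by apply: Rdiv_lt_0_compat; lra.
  lra.
have k0 : (0 < k)%nat.
  case: k kpos {hz} => [|k] //=; lra.
have keps : (1 <= INR k * eps)%R.
  have e1 : (1 / eps * eps = 1)%R by field; lra.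
  have := Rmult_le_compat_r eps _ _ (Rlt_le _ _ eps0) hz; lra.
have sR : (0 <= INR #|T|)%R by apply: pos_INR.
have hB : ((k + 1) * #|T| <= k * #|E|)%nat.
  apply/leP; apply: INR_le; rewrite -!multE !mult_INR -plusE plus_INR /=.
  exact: arithR1 sR (pos_INR k) hE keps.
have l2 : (0 < ln 2)%R by rewrite -ln_1; apply: ln_increasing; lra.
have log_ge : forall q, (expn 2 q <= #|T|)%nat -> (INR q <= log2 (INR #|T|))%R.
  move=> q hq; rewrite /log2.
  have h2 : (2 ^ q <= INR #|T|)%R by rewrite -pow2_INR; apply: le_INR; apply/leP.
  have h3 := ln_le' _ _ (pow_lt 2 q ltac:(lra)) h2.
  rewrite ln_pow in h3; last lra.
  apply: (Rmult_le_reg_r (ln 2)) => //.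
  rewrite /Rdiv Rmult_assoc Rinv_l; lra.
have kR : (1 <= INR k)%R by apply: (le_INR 1); apply/leP.
case: (leqP #|T| 3) => hs.
  exists setT; split.
    rewrite cardsT.
    have : (INR #|T| <= INR 3)%R by apply: le_INR; apply/leP.
    have := log_ge 1 s2; rewrite /= => h1 h3.
    apply: arithR2 => //; move: h3; rewrite /=; lra.
  rewrite n_spannedT cardsT addn1 -(ltn_pmul2l k0).
  move: hB; rewrite mulnDl mul1n; lia.
have s0 : (0 < #|T|)%nat by lia.
have /andP[hp1 hp2] := trunc_log_bounds (isT : 1 < 2) s0.
move: (trunc_log 2 #|T|) hp1 hp2 => p hp1 hp2.
have p2 : (2 <= p)%nat.
  case: p hp1 hp2 => [|[|p]] _ hp2 //; exfalso; move: hp2 hs;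
  rewrite ?expnS ?expn0 ?muln1; lia.
case: (boolP [forall S : {set T}, (#|S| <= 4 * (k * p.+1).+1) ==> (n_spanned ends S <= #|S|)]) => HB.
  exfalso.
  have Hc := @claim T E ends k p.+1 k0 hp2 (fun S hS => implyP (forallP HB S) hS).
  have Tn : [set: T] != set0.
    by rewrite -card_gt0 cardsT.
  have := Hc _ Tn; rewrite n_spannedT cardsT.
  by rewrite ltnNge hB.
move/forallPn: HB => [S]; rewrite negb_imply => /andP[hS1 hS2].
exists S; split; last by rewrite addn1 ltnNge.
have hn : (#|S| <= 8 * p * k)%nat.
  apply: (leq_trans hS1); nia.
have e8 : INR 8 = 8%R by rewrite /=; lra.
have := le_INR _ _ (elimT leP hn); rewrite -!multE !mult_INR e8.
move=> h; exact: arithR3 h (log_ge p hp1) (pos_INR k).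
Qed.
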